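(* Let $\phi:\mathbb{N}_0\to\mathbb{N}_0$ satisfy $\phi(0)=0$ and $\phi(x)\neq x$ for all $x\in\mathbb{N}$, let $k,n\ge1$, and assume the local function $\phi_n$ has no cycle. Let $p_\nu=|\{x\in D_n:h(x)=\nu\}|$ for $1\le\nu\le n$, $m=\max\{\nu\in\{1,\dots,n\}:p_\nu\ge1\}$ and $\pi=(p_1,\dots,p_m)$. Then $\pi$ is an ordered partition (composition) of $n$ of length $m$ with $1\le m\le n$ and $p_1,\dots,p_m\ge1$. Moreover, with $J_{n,k}(\phi)=\{x\in D_n:\phi_n^k(x)\in D_n\}$, \[ |J_{n,k}(\phi)|=n-\sum_{\nu=1}^k p_\nu\quad(1\le k\le m), \] and $|J_{n,k}(\phi)|=0$ for $k\ge m$.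
   Context: $\mathbb{N}=\{1,2,\dots\}$, $\mathbb{N}_0=\mathbb{N}\cup\{0\}$, $D_n=\{1,\dots,n\}$, $D_{n,0}=D_n\cup\{0\}$. The local function $\phi_n:D_{n,0}\to D_{n,0}$ is $\phi_n(x)=\phi(x)$ if $x\in D_n$ and $\phi(x)\in D_n$, and $\phi_n(x)=0$ otherwise. ''$\phi_n$ has no cycle'' means there are no $m\ge2$ and $x\in D_n$ with $\phi_n^m(x)=x$. The height of $x\in D_n$ is $h(x)=\min\{k\in\mathbb{N}:\phi_n^k(x)=0\}$. *)

(* Defs.v *)
From mathcomp Require Import all_boot.
Set Implicit Arguments. Unset Strict Implicit. Unset Printing Implicit Defensive.

Definition inD (n x : nat) : bool := (0 < x) && (x <= n).

Definition phin (phi : nat -> nat) (n x : nat) : nat :=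
  if inD n x && inD n (phi x) then phi x else 0.

Definition no_cycle (phi : nat -> nat) (n : nat) : Prop :=
  forall m x, 2 <= m -> inD n x -> iter m (phin phi n) x != x.

(* h(x) = nu, i.e. nu = min {k >= 1 : phi_n^k(x) = 0} *)
Definition has_height (phi : nat -> nat) (n x nu : nat) : bool :=
  [&& 0 < nu, iter nu (phin phi n) x == 0 &
      [forall k : 'I_nu, (0 < val k) ==> (iter k (phin phi n) x != 0)]].

Definition pcount (phi : nat -> nat) (n nu : nat) : nat :=
  count (fun x => has_height phi n x nu) (iota 1 n).

Definition mmax (phi : nat -> nat) (n : nat) : nat :=
  \max_(1 <= nu < n.+1 | 0 < pcount phi n nu) nu.

Definition Jcard (phi : nat -> nat) (n k : nat) : nat :=
  count (fun x => inD n (iter k (phin phi n) x)) (iota 1 n).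

(* Main.v *)
Require Import Defs.
From mathcomp Require Import all_boot.

Section Aux.
Variables (phi : nat -> nat) (n : nat).
Local Notation f := (phin phi n).

Lemma f0 : f 0 = 0.
Proof. by rewrite /phin /inD. Qed.

Lemma iter_f0 k : iter k f 0 = 0.
Proof. by elim: k => //= k ->; rewrite f0. Qed.

Lemma iter_zero_after x i k : i <= k -> iter i f x = 0 -> iter k f x = 0.
Proof. by move=> ik H; rewrite -(subnK ik) iterD H iter_f0. Qed.

Lemma iter_inD x k : inD n x -> iter k f x = 0 \/ inD n (iter k f x).
Proof.
move=> Hx; elim: k => [|k IH] /=; first by right.
rewrite /phin; case: ifP => [/andP [] _ ->|_]; by [right|left].
Qed.

Lemma inD_ne0 y : inD n y -> y != 0.
Proof. by case/andP; case: y. Qed.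
End Aux.

Theorem proposition2p5 (phi : nat -> nat) (n : nat) :
  phi 0 = 0 ->
  (forall x, 0 < x -> phi x != x) ->
  1 <= n ->
  no_cycle phi n ->
  let m := mmax phi n in
  [/\ 1 <= m <= n,
      (forall nu, 1 <= nu <= m -> 1 <= pcount phi n nu),
      \sum_(1 <= nu < m.+1) pcount phi n nu = n,
      (forall k, 1 <= k <= m ->
         Jcard phi n k = n - \sum_(1 <= nu < k.+1) pcount phi n nu) &
      (forall k, m <= k -> Jcard phi n k = 0)].
Proof.
move=> phi0 hphi n1 nocyc m.
set f := phin phi n.
have nofix : forall y d, inD n y -> 0 < d -> iter d f y != y.
  move=> y d Hy; case: d => // [[|d]] _; last by apply: nocyc.
  rewrite /= /f /phin; case: ifP => _.
    by apply: hphi; case/andP: Hy.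
  by rewrite eq_sym (@inD_ne0 n _ Hy).
(* pigeonhole *)
have itn : forall x, inD n x -> iter n f x = 0.
  move=> x Hx; apply/eqP/negPn/negP => Hn.
  have nz : forall i, i <= n -> iter i f x != 0.
    move=> i iln; apply/negP => /eqP H; move: Hn.
    by rewrite (@iter_zero_after phi n x i n iln H).
  pose s := [seq iter i f x | i <- iota 0 n.+1].
  have sub : {subset s <= iota 1 n}.
    move=> y /mapP [i]; rewrite mem_iota add0n => /andP [_ iln] ->.
    have := nz i iln; case: (@iter_inD phi n _ i Hx) => [->//|/andP[a b] _].
    by rewrite mem_iota a /= addnC addn1 ltnS.
  have : ~~ uniq s.
    apply/negP => u; have := uniq_leq_size u sub.
    by rewrite size_map !size_iota ltnn.
  case/(uniqPn 0) => i [j [ij]]; rewrite size_map size_iota => jn.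
  rewrite !(nth_map 0) ?size_iota ?(ltn_trans ij) // !nth_iota ?(ltn_trans ij) //.
  rewrite !add0n => eqij.
  have Hy : inD n (iter i f x).
    have iln : i <= n by rewrite -ltnS (ltn_trans ij).
    by case: (@iter_inD phi n _ i Hx) => // H; move: (nz i iln); rewrite H.
  have := nofix _ (j - i) Hy; rewrite subn_gt0 ij.
  rewrite -iterD subnK; last exact: ltnW.
  by rewrite -eqij eqxx => /(_ isT).
have ex : forall x, exists k, (0 < k) && (iter k f x == 0).
  move=> x; case Hx: (inD n x).
    by exists n; rewrite n1 itn.
  by exists 1; rewrite /= /f /phin Hx.
pose h x := ex_minn (ex x).
have hP : forall x, 0 < h x /\ iter (h x) f x = 0.
  by move=> x; rewrite /h; case: ex_minnP => k /andP [a /eqP b].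
have hmin : forall x k, 0 < k -> iter k f x = 0 -> h x <= k.
  move=> x k k0 H; rewrite /h; case: ex_minnP => j _; apply.
  by rewrite k0 H.
have hlt : forall x k, inD n x -> k < h x -> iter k f x != 0.
  move=> x k Hx kh; case: k kh => [|k] kh; first by rewrite (@inD_ne0 n _ Hx).
  by apply/eqP => H; move: (hmin _ _ (ltn0Sn k) H); rewrite leqNgt kh.
have hge : forall x k, h x <= k -> iter k f x = 0.
  by move=> x k hk; apply: (@iter_zero_after phi n x _ _ hk); case: (hP x).
have hn : forall x, inD n x -> h x <= n.
  by move=> x Hx; apply: hmin => //; apply: itn.
have hhe : forall x nu, has_height phi n x nu = (h x == nu).
  move=> x nu; apply/idP/idP.
    case/and3P => nu0 /eqP Hnu /forallP Hall.
    rewrite eqn_leq hmin //=; rewrite leqNgt; apply/negP => hl.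
    move: (Hall (Ordinal hl)); case: (hP x) => -> ->; by rewrite eqxx.
  move/eqP => <-; case: (hP x) => h0 hi; rewrite /has_height h0 hi eqxx /=.
  apply/forallP => [[k kl]] /=; apply/implyP => k0; apply/eqP => H.
  by move: (hmin _ _ k0 H); rewrite leqNgt kl.
have pc : forall nu, pcount phi n nu = count (fun x => h x == nu) (iota 1 n).
  by move=> nu; apply: eq_count => x; rewrite hhe.
have Dmem : forall x, (x \in iota 1 n) = inD n x.
  by move=> x; rewrite mem_iota /inD addnC addn1 ltnS.
have Jc : forall k, Jcard phi n k = count (fun x => k < h x) (iota 1 n).
  move=> k; apply: eq_in_count => x; rewrite Dmem => Hx.
  case: (ltnP k (h x)) => kh.
    by case: (@iter_inD phi n _ k Hx) => // H; move: (hlt _ _ Hx kh); rewrite H.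
  by rewrite hge.
have sumc : forall b, \sum_(1 <= nu < b.+1) pcount phi n nu
                      = count (fun x => h x < b.+1) (iota 1 n).
  elim=> [|b IH].
    rewrite big_geq //; symmetry; apply/eqP; rewrite -leqn0 leqNgt -has_count.
    by apply/hasP => [[x _]]; rewrite ltnS leqn0; case: (hP x) => /lt0n_neq0 /negbTE ->.
  rewrite big_nat_recr //= IH pc -count_predUI.
  rewrite (@eq_count _ (predI _ _) pred0); last first.
    move=> x /=; apply/negbTE; apply/negP => /andP [hl /eqP he].
    by rewrite he ltnn in hl.
  rewrite count_pred0 addn0; apply: eq_count => x /=.
  by rewrite (ltnS (h x) b.+1) (leq_eqVlt (h x) b.+1) orbC.
have mn : m <= n.
  rewrite /m /mmax; apply/bigmax_leqP_seq => nu.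
  by rewrite mem_index_iota ltnS => /andP [].
have hm : forall x, inD n x -> h x <= m.
  move=> x Hx; rewrite /m /mmax.
  apply: (leq_bigmax_seq (F := id)).
    by rewrite mem_index_iota ltnS (hn _ Hx); case: (hP x) => ->.
  rewrite pc -has_count; apply/hasP; exists x; by rewrite ?Dmem.
have D1 : inD n 1 by rewrite /inD n1.
have m1 : 1 <= m by apply: leq_trans (hm _ D1); case: (hP 1).
have [x0 [Hx0 hx0]] : exists x, inD n x /\ h x = m.
  case Hh: (has (fun x => h x == m) (iota 1 n)).
    by case/hasP: Hh => x; rewrite Dmem => Hx /eqP; exists x.
  move/hasPn: Hh => Hh; exfalso.
  have : m <= m.-1.
    rewrite {1}/m /mmax; apply/bigmax_leqP_seq => nu _.
    rewrite pc -has_count => /hasP [x xi /eqP <-].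
    rewrite -ltnS prednK //; move: (Hh x xi); rewrite ltn_neqAle => ->.
    by rewrite hm // -Dmem.
  by rewrite -ltnS prednK // ltnn.
split.
- by rewrite m1.
- move=> nu /andP [nu1 num].
  pose y := iter (m - nu) f x0.
  have yh : h y = nu.
    have e1 : iter nu f y = 0 by rewrite /y -iterD subnKC // -hx0; case: (hP x0).
    apply/eqP; rewrite eqn_leq hmin //= leqNgt; apply/negP => hy.
    have lt : h y + (m - nu) < h x0.
      by rewrite hx0 -{2}(subnKC num) ltn_add2r.
    have := hlt x0 _ Hx0 lt; rewrite iterD -/y.
    by case: (hP y) => _ ->; rewrite eqxx.
  have Hy : inD n y.
    case: (@iter_inD phi n _ (m - nu) Hx0) => // H.
    have lt : m - nu < h x0 by rewrite hx0 ltn_subrL nu1 m1.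
    by move: (hlt x0 _ Hx0 lt); rewrite H eqxx.
  rewrite pc -has_count; apply/hasP; exists y; by rewrite ?Dmem ?yh.
- rewrite sumc -[RHS](size_iota 1 n) -count_predT; apply: eq_in_count => x.
  by rewrite Dmem => Hx; rewrite /= ltnS hm.
- move=> k _; rewrite Jc sumc -[n in n - _](size_iota 1 n) -(count_predC (fun x => h x < k.+1)).
  rewrite addKn; apply: eq_count => x /=; by rewrite ltnS ltnNge.
- move=> k mk; rewrite Jc; apply/eqP; rewrite -leqn0 leqNgt -has_count.
  apply/hasP => [[x]]; rewrite Dmem => Hx; rewrite ltnNge.
  by rewrite (leq_trans (hm _ Hx) mk).
Qed.
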